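(* Let $X\subset\mathbb{P}^N$ be a projective variety such that $\operatorname{Hrk}_X(p)<\infty$ for every $p\in\mathbb{P}^N$. Then $X$ is strongly concise, i.e. for every $i\in\{0,\ldots,N\}$, $(X\cap H_i)\not\subset\bigcup_{j\ne i}H_j$.
   Context: Work in $\mathbb{P}^N$ over $\mathbb{C}$ with coordinates $x_0,\dots,x_N$; $H_i=\{x_i=0\}$. Hadamard product: $(p_0:\cdots:p_N)\star(q_0:\cdots:q_N)=(p_0q_0:\cdots:p_Nq_N)$, defined when not all $p_iq_i$ vanish. $\operatorname{Hrk}_X(q)=\min\{m\mid q=p_1\star\cdots\star p_m,\ p_i\in X\}$, or $\infty$ if no such decomposition exists. *)

(* Defs.v *)
From HB Require Import structures.
From mathcomp Require Import all_boot all_order all_algebra.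
From mathcomp Require Import reals.
From mathcomp Require Import complex.
From mathcomp Require Import mpoly.
Set Implicit Arguments. Unset Strict Implicit. Unset Printing Implicit Defensive.
Import Order.TTheory GRing.Theory Num.Theory.
Local Open Scope ring_scope.

Definition Cplx (R : realType) := R[i].

Section Proj.
Variable K : fieldType.
Variable N : nat.

(* Homogeneous coordinates (x_0 : ... : x_N) of a point of P^N:
   a vector indexed by 'I_(N.+1). *)
Definition coords := 'I_N.+1 -> K.

Definition is_proj_point (v : coords) : Prop := exists i, v i != 0.

Definition proj_eq (v w : coords) : Prop :=
  exists c : K, c != 0 /\ forall i, w i = c * v i.

Definition proj_subset := coords -> Prop.

Definition zero_locus (F : {mpoly K[N.+1]} -> Prop) : proj_subset :=
  fun v => is_proj_point v /\ forall f, F f -> f.@[v] = 0.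

Definition zariski_closed (X : proj_subset) : Prop :=
  exists F : {mpoly K[N.+1]} -> Prop,
    (forall f, F f -> exists d : nat, f \is d.-homog) /\
    (forall v, X v <-> zero_locus F v).

Definition proj_irreducible (X : proj_subset) : Prop :=
  (exists v, X v) /\
  forall Y Z : proj_subset, zariski_closed Y -> zariski_closed Z ->
    (forall v, X v -> Y v \/ Z v) ->
    (forall v, X v -> Y v) \/ (forall v, X v -> Z v).

Definition projective_variety (X : proj_subset) : Prop :=
  zariski_closed X /\ proj_irreducible X.

Definition hadamard (p q : coords) : coords := fun i => p i * q i.

(* q = p_1 * ... * p_m with p_1..p_m in X (m = size s >= 1), every partial
   Hadamard product being defined (a nonzero vector). *)
Fixpoint hadamard_seq (p : coords) (s : seq coords) : coords :=
  match s with
  | [::] => p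
  | p' :: s' => hadamard_seq (hadamard p p') s'
  end.

Definition Hdecomposition (X : proj_subset) (q : coords) (m : nat) : Prop :=
  exists (p : coords) (s : seq coords),
    size s = m.-1 /\ (0 < m)%N /\
    X p /\ (forall k, (k < size s)%N -> X (nth p s k)) /\
    (forall k, (k <= size s)%N -> is_proj_point (hadamard_seq p (take k s))) /\
    proj_eq (hadamard_seq p s) q.

Definition Hrk_finite (X : proj_subset) (q : coords) : Prop :=
  exists m : nat, Hdecomposition X q m.

Definition Hplane (i : 'I_N.+1) : proj_subset := fun v => v i = 0.

Definition strongly_concise (X : proj_subset) : Prop :=
  forall i : 'I_N.+1,
    ~ (forall v, X v -> Hplane i v -> exists j : 'I_N.+1, j != i /\ Hplane j v).

End Proj.

(* Main.v *)
Require Import Defs.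
From HB Require Import structures.
From mathcomp Require Import all_boot all_order all_algebra.
From mathcomp Require Import reals complex mpoly.
Set Implicit Arguments. Unset Strict Implicit. Unset Printing Implicit Defensive.
Import Order.TTheory GRing.Theory Num.Theory.
Local Open Scope ring_scope.

Lemma hs_val (K : fieldType) (N : nat) (p : coords K N) (s : seq (coords K N)) j :
  hadamard_seq p s j = p j * \prod_(x <- s) x j.
Proof.
elim: s p => [|a s IH] p /=; first by rewrite big_nil mulr1.
by rewrite IH big_cons /hadamard mulrA.
Qed.

Lemma hs_nth (K : fieldType) (N : nat) (p : coords K N) (s : seq (coords K N)) j :
  hadamard_seq p s j = p j * \prod_(0 <= k < size s) (nth p s k) j.
Proof. by rewrite hs_val (big_nth p). Qed.

Theorem mainTheorem4 (R : realType) (N : nat) (X : proj_subset (Cplx R) N) :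
  (1 <= N)%N ->
  projective_variety X ->
  (forall p : coords (Cplx R) N, is_proj_point p -> Hrk_finite X p) ->
  strongly_concise X.
Proof.
move=> hN _ hrk i Hcov.
pose q : coords (Cplx R) N := fun j => if j == i then 0 else 1.
have qpt : is_proj_point q.
  have [ei|ne] := eqVneq i ord_max.
    exists ord0; rewrite /q ifF ?oner_neq0 //; apply/negbTE.
    by rewrite ei; apply/eqP => /(congr1 val) /=; move=> h; rewrite -h in hN.
  by exists ord_max; rewrite /q ifF ?oner_neq0 //; apply/negbTE; rewrite eq_sym.
have [m [p [s [_ [_ [Xp [Xs [_ [c [c0 Hc]]]]]]]]]] := hrk q qpt.
set H := hadamard_seq p s in Hc.
have Hnz : forall j, j != i -> H j != 0.
  move=> j ji; apply/eqP => h; move: (Hc j); rewrite /q (negbTE ji) h mulr0.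
  by move/eqP; rewrite oner_eq0.
have Hi : H i = 0.
  by move: (Hc i); rewrite /q eqxx => /esym /eqP; rewrite mulf_eq0 (negbTE c0) => /eqP.
have contra : forall v : coords (Cplx R) N, X v -> v i = 0 ->
   (forall j, j != i -> v j != 0) -> False.
  move=> v Xv vi hv; have [j [ji hj]] := Hcov v Xv vi.
  by move: (hv j ji); rewrite /Hplane in hj; rewrite hj eqxx.
move: Hi; rewrite /H hs_nth => /eqP; rewrite mulf_eq0 => /orP [/eqP pi|].
  apply: (contra p Xp pi) => j ji; move: (Hnz j ji); rewrite /H hs_nth.
  by rewrite mulf_eq0 negb_or => /andP [].
rewrite prodf_seq_eq0 => /hasP [k]; rewrite mem_index_iota => /andP [_ ks] /= /eqP nk.
apply: (contra _ (Xs k ks) nk) => j ji; move: (Hnz j ji); rewrite /H hs_nth.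
rewrite mulf_eq0 negb_or => /andP [_]; rewrite prodf_seq_eq0 => /hasPn /(_ k).
by rewrite mem_index_iota ks => /(_ isT).
Qed.
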